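(* Let $(\mathcal{X},d_0)$ be a compact metric space with $d_0\le1$, let $l\in\mathbb{N}$, $1\le p<\infty$, and let $K:\mathbb{Z}_+\times\mathcal{X}^l\to[0,1]$ be symmetric in its last $l$ arguments and satisfy $$|K(m;u_1,\dots,u_l)-K(m;v_1,\dots,v_l)|\le\frac1l\sum_{i=1}^l d_0(u_i,v_i)$$ for all $m\in\mathbb{Z}_+$ and $u_i,v_i\in\mathcal{X}$. For $\xi=\sum_{i=1}^n\delta_{x_i}$ with $n\ge l$ let $\overline{K}(\xi)=\frac1{\binom nl}\sum_{1\le i_1<\dots<i_l\le n}K(n;x_{i_1},\dots,x_{i_l})$, and define $f:\mathfrak{N}\to[0,1]$ by $$f(\xi)=\Big(\frac1{\binom nl}\sum_{1\le i_1<\dots<i_l\le n}\big|K(n;x_{i_1},\dots,x_{i_l})-\overline{K}(\xi)\big|^p\Big)^{1/p}$$ for such $\xi$, and $f(\xi)=0$ if $|\xi|<l$. Then $|f(\xi)-f(\eta)|\le 2\,d_1^{(p)}(\xi,\eta)$ for all $\xi,\eta\in\mathfrak{N}$.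
   Context: $\mathfrak{N}$ is the space of finite point measures on $\mathcal{X}$; $|\xi|$ is the total mass. $\Pi_n$ is the set of permutations of $\{1,\dots,n\}$. For $\xi=\sum_{i=1}^{|\xi|}\delta_{x_i}$, $\eta=\sum_{i=1}^{|\eta|}\delta_{y_i}$: $d_1^{(p)}(\xi,\eta)=\min_{\pi\in\Pi_n}\big(\frac1n\sum_{i=1}^n d_0(x_i,y_{\pi(i)})^p\big)^{1/p}$ if $|\xi|=|\eta|=n\ge1$, $=1$ if $|\xi|\ne|\eta|$, $=0$ if $|\xi|=|\eta|=0$. *)

(* Defs.v *)
From HB Require Import structures.
From mathcomp Require Import all_boot all_order all_algebra all_fingroup.
From mathcomp Require Import reals exp.
Unset Printing Implicit Defensive.
Import Order.TTheory GRing.Theory Num.Theory.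
Local Open Scope ring_scope.

Section Defs.
Variables (R : realType) (X : Type).

Definition is_metric (d0 : X -> X -> R) : Prop :=
  [/\ forall x y, 0 <= d0 x y,
      forall x y, d0 x y = 0 <-> x = y,
      forall x y, d0 x y = d0 y x &
      forall x y z, d0 x z <= d0 x y + d0 y z].

(* (X, d0) is compact (sequential compactness, equivalent for metric spaces) *)
Definition metric_compact (d0 : X -> X -> R) : Prop :=
  forall u : nat -> X, exists (phi : nat -> nat) (x : X),
    (forall k, (phi k < phi k.+1)%N) /\
    forall e : R, 0 < e -> exists N, forall k, (N <= k)%N -> d0 (u (phi k)) x < e.

(* A finite point measure xi = sum_i delta_{x_i} is represented by the list
   of its atoms (with multiplicity); |xi| = size xs. *)

Definition atom (xs : seq X) (i : 'I_(size xs)) : X := tnth (in_tuple xs) i.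

Definition incr (l n : nat) (g : {ffun 'I_l -> 'I_n}) : bool :=
  [forall i : 'I_l, forall j : 'I_l, (i < j)%N ==> (g i < g j)%N].

Variables (l : nat) (p : R) (K : nat -> ('I_l -> X) -> R).

Definition Kbar (xs : seq X) : R :=
  ('C(size xs, l)%:R)^-1 *
  \sum_(g : {ffun 'I_l -> 'I_(size xs)} | incr l (size xs) g) K (size xs) (fun i => atom xs (g i)).

Definition f_stat (xs : seq X) : R :=
  if (size xs < l)%N then 0 else
  powR (('C(size xs, l)%:R)^-1 *
        \sum_(g : {ffun 'I_l -> 'I_(size xs)} | incr l (size xs) g)
           powR `|K (size xs) (fun i => atom xs (g i)) - Kbar xs| p) (p^-1).

Definition d1_cost (d0 : X -> X -> R) (xs ys : seq X) (s : 'S_(size xs)) : R :=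
  powR ((size xs)%:R^-1 *
        \sum_(i < size xs) powR (d0 (atom xs i) (nth (atom xs i) ys (s i))) p) (p^-1).

Definition d1 (d0 : X -> X -> R) (xs ys : seq X) : R :=
  if size xs != size ys then 1
  else if size xs == 0%N then 0
  else \big[Order.min/d1_cost d0 xs ys 1%g]_(s : 'S_(size xs)) d1_cost d0 xs ys s.

End Defs.

(* Main.v *)
Require Import Defs.
From HB Require Import structures.
From mathcomp Require Import all_boot all_order all_algebra all_fingroup.
From mathcomp Require Import reals exp interval_inference lra ring zify.
From mathcomp Require convex hoelder.
Import Order.TTheory GRing.Theory Num.Theory.
Local Open Scope ring_scope.

Lemma powR_convex {R : realType} (p t x y : R) : 1 <= p -> 0 <= t <= 1 -> 0 <= x -> 0 <= y ->
  (t * x + (1 - t) * y) `^ p <= t * x `^ p + (1 - t) * y `^ p.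
Proof.
move=> p1 /andP[t0 t1] x0 y0.
have := @hoelder.convex_powR R p p1 (Itv01 t0 t1) x y.
move=> H; move: H.
rewrite !classical_sets.mem_setE /= !in_itv /= x0 y0 => /(_ isT isT).
by rewrite !convex.convRE.
Qed.

Lemma powRV {R : realType} (a p : R) : 0 <= a -> (a^-1) `^ p = (a `^ p)^-1.
Proof. by move=> a0; rewrite -powR_inv1 // -powRrM mulN1r powRN. Qed.

Lemma powRK {R : realType} (a p : R) : 0 < p -> 0 <= a -> (a `^ p) `^ p^-1 = a.
Proof. by move=> p0 a0; rewrite -powRrM mulfV ?gt_eqF // powRr1. Qed.

Lemma powRKV {R : realType} (a p : R) : 0 < p -> 0 <= a -> (a `^ p^-1) `^ p = a.
Proof. by move=> p0 a0; rewrite -powRrM mulVf ?gt_eqF // powRr1. Qed.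

Lemma bernoulliR {R : realType} (p a : R) : 1 <= p -> 0 <= a -> 1 + p * (a - 1) <= a `^ p.
Proof.
move=> p1 a0.
have [->|pn1] := eqVneq p 1; first by rewrite powRr1 //; lra.
have p1' : 1 < p by rewrite lt_neqAle eq_sym pn1.
have p0 : 0 < p by apply: lt_trans p1'.
pose q := p / (p - 1).
have pm0 : 0 < p - 1 by rewrite subr_gt0.
have q0 : 0 < q by rewrite divr_gt0.
have pq : p^-1 + q^-1 = 1.
  by rewrite /q invf_div -{1}(div1r p) -mulrDl addrC subrK mulfV ?gt_eqF.
have := conjugate_powR a0 ler01 p0 q0 pq.
rewrite mulr1 powR1 => H.
have : p * a <= a `^ p + p * q^-1.
  have := ler_wpM2l (ltW p0) H.
  by rewrite mulrDr mulrCA mulfV ?gt_eqF // mulr1 mul1r.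
have -> : p * q^-1 = p - 1.
  by rewrite /q invf_div mulrCA mulfV ?gt_eqF // mulr1.
move=> h; lra.
Qed.

Section Np.
Variables (R : realType) (p : R) (I : finType) (P : pred I).
Hypotheses (Hp : 1 <= p) (HP : (0 < #|P|)%N).

Definition avg (F : I -> R) := (#|P|%:R)^-1 * \sum_(i in P) F i.
Definition Np (v : I -> R) := powR (avg (fun i => `|v i| `^ p)) p^-1.

Let p0 : 0 < p. Proof. exact: lt_le_trans ltr01 Hp. Qed.
Let cP : 0 < (#|P|%:R : R). Proof. by rewrite ltr0n. Qed.
Let cPi : 0 <= (#|P|%:R : R)^-1. Proof. by rewrite invr_ge0 ltW. Qed.

Lemma avg_ge0 F : (forall i, P i -> 0 <= F i) -> 0 <= avg F.
Proof. by move=> H; rewrite /avg mulr_ge0 //; apply: sumr_ge0. Qed.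

Lemma avg_le F G : (forall i, P i -> F i <= G i) -> avg F <= avg G.
Proof. by move=> H; rewrite /avg ler_wpM2l //; apply: ler_sum. Qed.

Lemma avg_cst c : avg (fun _ => c) = c.
Proof. by rewrite /avg sumr_const -[c *+ _]mulr_natr mulrCA mulVf ?gt_eqF // mulr1. Qed.

Lemma avgD F G : avg (fun i => F i + G i) = avg F + avg G.
Proof. by rewrite /avg big_split mulrDr. Qed.

Lemma avgN F : avg (fun i => - F i) = - avg F.
Proof. by rewrite /avg sumrN mulrN. Qed.

Lemma avgZ c F : avg (fun i => c * F i) = c * avg F.
Proof. by rewrite /avg -mulr_sumr mulrCA. Qed.

Lemma norm_avg F : `|avg F| <= avg (fun i => `|F i|).
Proof.
rewrite /avg normrM ger0_norm // ler_wpM2l //.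
exact: ler_norm_sum.
Qed.

Lemma Np_ge0 v : 0 <= Np v.
Proof. exact: powR_ge0. Qed.

Lemma NpE v : Np v `^ p = avg (fun i => `|v i| `^ p).
Proof. by rewrite powRKV // avg_ge0 // => i _; apply: powR_ge0. Qed.

Lemma Np_le u v : (forall i, P i -> `|u i| <= `|v i|) -> Np u <= Np v.
Proof.
move=> H; apply: ge0_ler_powR.
- by rewrite invr_ge0 ltW.
- by rewrite nnegrE; apply: avg_ge0 => i _; apply: powR_ge0.
- by rewrite nnegrE; apply: avg_ge0 => i _; apply: powR_ge0.
apply: avg_le => i Pi; apply: ge0_ler_powR; rewrite ?nnegrE //.
- exact: ltW.
exact: H.
Qed.

Lemma Np_eq u v : (forall i, P i -> `|u i| = `|v i|) -> Np u = Np v.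
Proof. by move=> H; apply/eqP; rewrite eq_le; apply/andP; split; apply: Np_le => i Pi; rewrite H. Qed.

Lemma NpZ c v : Np (fun i => c * v i) = `|c| * Np v.
Proof.
rewrite /Np.
have -> : avg (fun i => `|c * v i| `^ p) = `|c| `^ p * avg (fun i => `|v i| `^ p).
  by rewrite -avgZ; congr avg; apply: boolp.funext => i; rewrite normrM powRM.
rewrite powRM ?powR_ge0 // ?powRK //.
by apply: avg_ge0 => i _; apply: powR_ge0.
Qed.

Lemma Np_cst c : Np (fun _ => c) = `|c|.
Proof. by rewrite /Np avg_cst powRK. Qed.

Lemma Np0 : Np (fun _ => 0) = 0.
Proof. by rewrite Np_cst normr0. Qed.

Lemma NpN v : Np (fun i => - v i) = Np v.
Proof. by apply: Np_eq => i _; rewrite normrN. Qed.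

Lemma Np_eq0 v : Np v = 0 -> forall i, P i -> v i = 0.
Proof.
move=> H i Pi.
have : avg (fun i => `|v i| `^ p) = 0 by rewrite -NpE H powR0 ?gt_eqF.
rewrite /avg => /eqP; rewrite mulf_eq0 invr_eq0 gt_eqF //= => /eqP H2.
have := psumr_eq0P (fun i _ => powR_ge0 `|v i| p) H2 Pi.
by move/powR_eq0_eq0/eqP; rewrite normr_eq0 => /eqP.
Qed.

Lemma minkowski u v : Np (fun i => u i + v i) <= Np u + Np v.
Proof.
have [A0|A0] := eqVneq (Np u) 0.
  rewrite A0 add0r; apply: Np_le => i Pi.
  by rewrite (Np_eq0 _ A0 _ Pi) add0r.
have [B0|B0] := eqVneq (Np v) 0.
  rewrite B0 addr0; apply: Np_le => i Pi.
  by rewrite (Np_eq0 _ B0 _ Pi) addr0.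
have Ap : 0 < Np u by rewrite lt0r A0 Np_ge0.
have Bp : 0 < Np v by rewrite lt0r B0 Np_ge0.
have EA0 := NpE u; have EB0 := NpE v.
move: (Np u) (Np v) Ap Bp EA0 EB0 => A B Ap Bp EA0 EB0 {A0 B0}.
have [S SE] : {S | S = A + B} by exists (A + B).
have Sp : 0 < S by rewrite SE addr_gt0.
have S0 : S != 0 by rewrite gt_eqF.
have [t tE] : {t | t = A / S} by exists (A / S).
have t1 : 1 - t = B / S.
  by rewrite tE -[1](mulfV S0) -mulrBl; congr (_ * _); rewrite SE; lra.
have t0 : 0 <= t by rewrite tE; apply: divr_ge0; apply: ltW.
have tle1 : t <= 1.
  by rewrite tE ler_pdivrMr // mul1r SE; lra.
have t0' : 0 <= 1 - t by rewrite subr_ge0.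
have E : forall (w : I -> R) (C : R), 0 < C -> C `^ p = avg (fun i => `|w i| `^ p) ->
    avg (fun i => (`|w i| / C) `^ p) = 1.
  move=> w C Cp HC.
  have -> : (fun i => (`|w i| / C) `^ p) = (fun i => (C `^ p)^-1 * `|w i| `^ p).
    apply: boolp.funext => i.
    rewrite powRM //; last by rewrite invr_ge0 ltW.
    by rewrite powRV ?ltW // mulrC.
  by rewrite avgZ -HC mulVf // gt_eqF // powR_gt0.
have EA := E u A Ap EA0.
have EB := E v B Bp EB0.
have key : avg (fun i => `|u i + v i| `^ p) <=
    avg (fun i => S `^ p * (t * (`|u i| / A) `^ p + (1 - t) * (`|v i| / B) `^ p)).
  apply: avg_le => i Pi.
  have uA : 0 <= `|u i| / A by apply: divr_ge0 => //; apply: ltW.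
  have vB : 0 <= `|v i| / B by apply: divr_ge0 => //; apply: ltW.
  have m0 : 0 <= t * (`|u i| / A) + (1 - t) * (`|v i| / B).
    by apply: addr_ge0; apply: mulr_ge0.
  have h1 : `|u i + v i| <= S * (t * (`|u i| / A) + (1 - t) * (`|v i| / B)).
    have -> : S * (t * (`|u i| / A) + (1 - t) * (`|v i| / B)) = `|u i| + `|v i|.
      have A0 : A != 0 by rewrite gt_eqF.
      have B0 : B != 0 by rewrite gt_eqF.
      rewrite t1 tE; field.
      by rewrite S0 A0 B0.
    exact: ler_normD.
  apply: le_trans (_ : (S * (t * (`|u i| / A) + (1 - t) * (`|v i| / B))) `^ p <= _).
    apply: ge0_ler_powR; [exact: ltW | by rewrite nnegrE
      | by rewrite nnegrE; apply: mulr_ge0 => //; apply: ltW | exact: h1].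
  rewrite powRM //; last exact: ltW.
  rewrite ler_wpM2l ?powR_ge0 //.
  by apply: powR_convex => //; rewrite t0 tle1.
move: key; rewrite avgZ avgD !avgZ EA EB !mulr1 subrKC mulr1 => key.
rewrite /Np -SE -(powRK S p p0 (ltW Sp)).
apply: ge0_ler_powR; [by rewrite invr_ge0 ltW
  | by rewrite nnegrE; apply: avg_ge0 => i _; apply: powR_ge0
  | by rewrite nnegrE powR_ge0 | exact: key].
Qed.

Lemma avg_le_Np v : `|avg v| <= Np v.
Proof.
apply: le_trans (norm_avg v) _.
have [M ME] : {M | M = avg (fun i => `|v i|)} by exists (avg (fun i => `|v i|)).
rewrite -ME.
have M0 : 0 <= M by rewrite ME; apply: avg_ge0.
have [->|Mn0] := eqVneq M 0; first exact: Np_ge0.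
have Mp : 0 < M by rewrite lt0r Mn0.
suff H : M `^ p <= Np v `^ p.
  rewrite -(powRK M p p0 M0) -(powRK (Np v) p p0 (Np_ge0 v)).
  apply: ge0_ler_powR; [by rewrite invr_ge0 ltW | by rewrite nnegrE powR_ge0
    | by rewrite nnegrE powR_ge0 | exact: H].
rewrite NpE.
have H : forall i, P i -> M `^ p * (1 + p * (`|v i| / M - 1)) <= `|v i| `^ p.
  move=> i Pi.
  have := bernoulliR _ _ Hp (divr_ge0 (normr_ge0 (v i)) M0).
  rewrite powRM; [|exact: normr_ge0|by rewrite invr_ge0].
  rewrite powRV // => h.
  have := ler_wpM2l (powR_ge0 M p) h.
  by rewrite mulrCA mulfV ?mulr1 // gt_eqF // powR_gt0.
apply: le_trans; last exact: (avg_le _ _ H).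
rewrite avgZ avgD avg_cst avgZ.
rewrite (_ : avg (fun i => `|v i| / M - 1) = 0) ?mulr0 ?addr0 ?mulr1 //.
rewrite avgD avgN avg_cst.
rewrite (_ : (fun i => `|v i| / M) = (fun i => M^-1 * `|v i|)); last by apply: boolp.funext => i; rewrite mulrC.
by rewrite avgZ -ME mulVf // subrr.
Qed.

Lemma Np_sum (J : Type) (r : seq J) (w : J -> I -> R) :
  Np (fun i => \sum_(j <- r) w j i) <= \sum_(j <- r) Np (w j).
Proof.
elim: r => [|j r IH].
  rewrite big_nil.
  have -> : (fun i => \sum_(j <- [::]) w j i) = (fun _ => 0).
    by apply: boolp.funext => i; rewrite big_nil.
  by rewrite Np0.
rewrite big_cons.
have -> : (fun i => \sum_(j0 <- j :: r) w j0 i) = (fun i => w j i + \sum_(j0 <- r) w j0 i).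
  by apply: boolp.funext => i; rewrite big_cons.
apply: le_trans; first exact: minkowski.
by rewrite lerD2l.
Qed.

End Np.

Section Comb.
Variables (l n : nat).
Local Notation FF := {ffun 'I_l -> 'I_n}.

Lemma incrP (g : FF) : reflect (forall i j : 'I_l, (i < j)%N -> (g i < g j)%N) (incr l n g).
Proof.
apply: (iffP forallP) => [H i j|H i]; first by move/forallP: (H i) => /(_ j)/implyP.
by apply/forallP => j; apply/implyP; apply: H.
Qed.

Lemma incr_inj (g : FF) : incr l n g -> injective g.
Proof.
move/incrP => H i j E; case: (ltngtP i j) => [/H|/H|/val_inj //]; by rewrite E ltnn.
Qed.

Lemma incr_ltn (g : FF) a b : incr l n g -> (g a < g b)%N -> (a < b)%N.
Proof.
move/incrP => H lt; case: (ltngtP a b) => [//|/H h|/val_inj E].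
  by have := ltn_trans lt h; rewrite ltnn.
by move: lt; rewrite E ltnn.
Qed.

Lemma incr_ge (f : 'I_l -> 'I_l) : (forall i j : 'I_l, (i < j)%N -> (f i < f j)%N) ->
  forall i : 'I_l, (i <= f i)%N.
Proof.
move=> H [m Hm]; elim: m Hm => [|m IH] Hm //=.
have := H (Ordinal (ltnW Hm)) (Ordinal Hm) (ltnSn m).
have := IH (ltnW Hm); rewrite /=; lia.
Qed.

Lemma incr_comp_eq (g g' : FF) (s s' : {perm 'I_l}) : incr l n g -> incr l n g' ->
  (forall i, g (s i) = g' (s' i)) -> g = g' /\ s = s'.
Proof.
move=> ig ig' E.
pose t j := s' ((s^-1)%g j); pose t' j := s ((s'^-1)%g j).
have Et : forall j, g j = g' (t j) by move=> j; rewrite /t -E permKV.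
have Et' : forall j, g' j = g (t' j) by move=> j; rewrite /t' E permKV.
have mt : forall i j : 'I_l, (i < j)%N -> (t i < t j)%N.
  by move=> i j lij; apply: (@incr_ltn g' _ _ ig'); rewrite -!Et; move/incrP: ig; apply.
have mt' : forall i j : 'I_l, (i < j)%N -> (t' i < t' j)%N.
  by move=> i j lij; apply: (@incr_ltn g _ _ ig); rewrite -!Et'; move/incrP: ig'; apply.
have tt' : forall j, t' (t j) = j by move=> j; rewrite /t /t' permK permKV.
have tid : forall j, t j = j.
  move=> j; apply/val_inj/eqP; rewrite eqn_leq (@incr_ge t mt j) andbT.
  by rewrite -{2}(tt' j); exact: (@incr_ge t' mt' (t j)).
split.
  by apply/ffunP => j; rewrite Et tid.
apply/permP => i; have := tid (s i); rewrite /t permK => ->; done.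
Qed.

Lemma incr_sort (h : FF) : injective h ->
  exists g (s : {perm 'I_l}), incr l n g /\ h = [ffun i => g (s i)].
Proof.
move=> ih.
pose u := [tuple h i | i < l].
pose le := fun a b : 'I_n => (a <= b)%N.
have : perm_eq (sort le u) u by rewrite perm_sort.
case/tuple_permP => q Eq.
exists [ffun i => tnth u (q i)], (q^-1)%g; split; last first.
  by apply/ffunP => i; rewrite !ffunE permKV tnth_mktuple.
have uu : uniq u.
  by rewrite map_inj_uniq ?enum_uniq.
have su : uniq (sort le u) by rewrite sort_uniq.
have ss : sorted le (sort le u) by apply: sort_sorted => a b; apply: leq_total.
have sz : size (sort le u) = l by rewrite size_sort size_tuple.
have nE : forall i : 'I_l, nth (h i) (sort le u) i = tnth u (q i).
  by move=> i; rewrite Eq /= (nth_map i) ?size_enum_ord // nth_ord_enum.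
apply/incrP => i j lij; rewrite !ffunE -(nE i) -(nE j).
have il : (i < size (sort le u))%N by rewrite sz.
have jl : (j < size (sort le u))%N by rewrite sz.
rewrite (set_nth_default (h i) (h j)) //.
rewrite ltn_neqAle.
have := @sorted_leq_nth _ le (fun y x z => @leq_trans y x z) (fun x => leqnn x) (h i) _ ss i j il jl (ltnW lij).
rewrite /le => ->; rewrite andbT.
rewrite -/le; apply/negP => /eqP /val_inj /eqP; rewrite (nth_uniq _ il jl su) => /eqP E; by move: lij; rewrite E ltnn.
Qed.

End Comb.

Section Sum.
Variables (R : realType) (l n : nat).
Local Notation FF := {ffun 'I_l -> 'I_n}.

Lemma sum_inj_incr (F : FF -> R) :
  (forall (g : FF) (s : {perm 'I_l}), F [ffun i => g (s i)] = F g) ->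
  \sum_(h : FF | injectiveb h) F h = (l`!)%:R * \sum_(g | incr l n g) F g.
Proof.
move=> HF.
pose Phi := fun x : FF * {perm 'I_l} => [ffun i => x.1 (x.2 i)].
pose A := [set x : FF * {perm 'I_l} | incr l n x.1].
have imA : [set h : FF | injectiveb h] = Phi @: A.
  apply/setP => h; rewrite inE; apply/idP/idP.
  - move/injectiveP => ih; have [g [s [ig ->]]] := @incr_sort _ _ h ih.
    by apply/imsetP; exists (g, s) => //; rewrite inE.
  - case/imsetP => [[g s]]; rewrite inE /= => ig ->.
    apply/injectiveP => i j; rewrite !ffunE => /(@incr_inj _ _ g ig).
    exact: perm_inj.
have injPhi : {in A &, injective Phi}.
  move=> [g s] [g' s']; rewrite !inE /= => ig ig' /ffunP E.
  have [-> ->] := @incr_comp_eq _ _ g g' s s' ig ig' (fun i => etrans (esym (ffunE _ _)) (etrans (E i) (ffunE _ _))).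
  by [].
rewrite (eq_bigl (fun h => h \in [set h : FF | injectiveb h])); last by move=> h; rewrite inE.
rewrite imA big_imset //=.
rewrite (eq_bigr (fun x => F x.1)); last by move=> [g s] _; exact: HF.
rewrite (eq_bigl (fun x => incr l n x.1 && true)); last by move=> x; rewrite inE andbT.
rewrite -(pair_big (fun g => incr l n g) (fun _ => true) (fun g _ => F g)) /=.
rewrite mulr_sumr; apply: eq_bigr => g _.
rewrite big_const card_Sn mulr_natl; elim: (l`!) => [|k IH] //=; by rewrite IH mulrS.
Qed.

End Sum.

Lemma card_injP l n : #|[pred h : {ffun 'I_l -> 'I_n} | injectiveb h]| = (n ^_ l)%N.
Proof. by rewrite -cardsE card_inj_ffuns !card_ord. Qed.

Section D.
Variables (R : realType) (l n : nat).
Local Notation FF := {ffun 'I_l -> 'I_n}.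


Lemma avg_incr (F : FF -> R) :
  (forall (g : FF) (s : {perm 'I_l}), F [ffun i => g (s i)] = F g) ->
  ('C(n, l)%:R)^-1 * \sum_(g | incr l n g) F g =
  ((n ^_ l)%N%:R)^-1 * \sum_(h : FF | injectiveb h) F h.
Proof.
move=> HF; rewrite sum_inj_incr // -bin_ffact natrM invfM -mulrA.
by rewrite mulKf // pnatr_eq0 -lt0n fact_gt0.
Qed.

Lemma sum_inj_perm (F : FF -> R) (s : {perm 'I_n}) :
  \sum_(h : FF | injectiveb h) F [ffun i => s (h i)] = \sum_(h : FF | injectiveb h) F h.
Proof.
have inj : injective (fun h : FF => [ffun i => s (h i)]).
  by move=> h h' /ffunP E; apply/ffunP => i; have := E i; rewrite !ffunE => /perm_inj.
rewrite [RHS](reindex_inj inj) /=; apply: eq_bigl => h.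
apply/injectiveP/injectiveP => ih i j.
  by rewrite !ffunE => /perm_inj /ih.
by move=> E; apply: ih; rewrite !ffunE E.
Qed.

Lemma double_count (D : 'I_n -> R) (i : 'I_l) : (0 < n)%N -> (l <= n)%N ->
  ((n ^_ l)%N%:R)^-1 * \sum_(h : FF | injectiveb h) D (h i) = (n%:R)^-1 * \sum_j D j.
Proof.
case: n D => [//|n'] D _ ln.
set S := \sum_(h : {ffun 'I_l -> 'I_n'.+1} | injectiveb h) D (h i).
have shift : forall k : 'I_n'.+1, S = \sum_(h : {ffun 'I_l -> 'I_n'.+1} | injectiveb h) D (h i + k)%R.
  move=> k.
  have inj : injective (fun h : {ffun 'I_l -> 'I_n'.+1} => [ffun a => (h a + k)%R]).
    by move=> h h' /ffunP E; apply/ffunP => a; have := E a; rewrite !ffunE => /addIr.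
  rewrite /S (reindex_inj inj) /=; apply: eq_big => h.
    apply/injectiveP/injectiveP => ih a b.
      by move=> E; apply: ih; rewrite !ffunE E.
    by rewrite !ffunE => /addIr /ih.
  by rewrite ffunE.
have tot : (n'.+1)%:R * S = ((n'.+1) ^_ l)%N%:R * \sum_j D j.
  transitivity (\sum_(k : 'I_n'.+1) S).
    by rewrite sumr_const card_ord mulr_natl.
  rewrite (eq_bigr _ (fun k _ => shift k)) exchange_big /=.
  transitivity (\sum_(h : {ffun 'I_l -> 'I_n'.+1} | injectiveb h) \sum_j D j).
    apply: eq_bigr => h _.
    by rewrite [RHS](reindex_inj (addrI (h i))).
  rewrite sumr_const -(card_injP l n'.+1) mulr_natl.
  congr (_ *+ _); apply: eq_card => h; by rewrite !inE.
have n0 : (n'.+1)%:R != 0 :> R by rewrite pnatr_eq0.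
have c0 : ((n'.+1) ^_ l)%N%:R != 0 :> R.
  by rewrite pnatr_eq0 -lt0n ffact_gt0.
apply: (mulfI n0); rewrite mulrCA tot.
by rewrite mulKf // mulVKf.
Qed.

End D.

Section Core.
Variables (R : realType) (X : Type) (d0 : X -> X -> R) (l : nat) (p : R)
  (K : nat -> ('I_l -> X) -> R).
Hypotheses (Hd0 : forall x y, 0 <= d0 x y) (Hl : (1 <= l)%N) (Hp : 1 <= p)
  (HK01 : forall m u, (0 < m)%N -> 0 <= K m u <= 1)
  (HKsym : forall m (s : 'S_l) u, (0 < m)%N -> K m (fun i => u (s i)) = K m u)
  (HKlip : forall m u v, (0 < m)%N ->
     `|K m u - K m v| <= l%:R^-1 * \sum_(i < l) d0 (u i) (v i)).

Definition Kb n (x : 'I_n -> X) : R :=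
  ('C(n, l)%:R)^-1 * \sum_(g : {ffun 'I_l -> 'I_n} | incr l n g) K n (fun i => x (g i)).

Definition Gf n (x : 'I_n -> X) : R :=
  if (n < l)%N then 0 else
  powR (('C(n, l)%:R)^-1 *
        \sum_(g : {ffun 'I_l -> 'I_n} | incr l n g)
           powR `|K n (fun i => x (g i)) - Kb n x| p) (p^-1).

Lemma f_statE xs : f_stat R X l p K xs = Gf (size xs) (atom X xs).
Proof. by []. Qed.

Let p0 : 0 < p. Proof. exact: lt_le_trans ltr01 Hp. Qed.

Local Notation Pn n := [pred h : {ffun 'I_l -> 'I_n} | injectiveb h].
Local Notation avgn n := (avg R _ (Pn n)).
Local Notation Npn n := (Np R p _ (Pn n)).

Lemma avgPE n (F : {ffun 'I_l -> 'I_n} -> R) :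
  avgn n F = ((n ^_ l)%N%:R)^-1 * \sum_(h : {ffun 'I_l -> 'I_n} | injectiveb h) F h.
Proof. by rewrite /avg card_injP. Qed.

Lemma Kinv n (x : 'I_n -> X) (g : {ffun 'I_l -> 'I_n}) (s : {perm 'I_l}) : (0 < n)%N ->
  K n (fun i => x ([ffun i => g (s i)] i)) = K n (fun i => x (g i)).
Proof.
move=> n0; rewrite -(HKsym n s (fun j => x (g j)) n0).
by congr (K n); apply: boolp.funext => i; rewrite ffunE.
Qed.

Lemma GfE n (x : 'I_n -> X) : (l <= n)%N ->
  Gf n x = Npn n (fun h => K n (fun i => x (h i)) - avgn n (fun h => K n (fun i => x (h i)))).
Proof.
move=> ln; have n0 : (0 < n)%N by apply: leq_trans ln.
rewrite /Gf ltnNge ln /= /Np.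
have -> : Kb n x = avgn n (fun h => K n (fun i => x (h i))).
  by rewrite avgPE /Kb avg_incr // => g s; apply: Kinv.
congr powR; rewrite [RHS]avgPE avg_incr // => g s.
by rewrite Kinv.
Qed.

Lemma key_analytic (I : finType) (P : pred I) (HP : (0 < #|P|)%N) (a b : I -> R) :
  `|Np R p I P (fun i => a i - avg R I P a) - Np R p I P (fun i => b i - avg R I P b)|
    <= 2 * Np R p I P (fun i => a i - b i).
Proof.
have mk := minkowski R p I P Hp HP.
have hAB : avg R I P a - avg R I P b = avg R I P (fun i => a i - b i).
  by rewrite avgD avgN.
have hle : `|avg R I P a - avg R I P b| <= Np R p I P (fun i => a i - b i).
  by rewrite hAB; apply: avg_le_Np.
move: hle; move: (avg R I P a) (avg R I P b) => A B hle.
have e1 : (fun i => a i - A) = (fun i => ((a i - A) - (b i - B)) + (b i - B)).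
  by apply: boolp.funext => i /=; ring.
have i1 : Np R p I P (fun i => a i - A) <=
    Np R p I P (fun i => (a i - A) - (b i - B)) + Np R p I P (fun i => b i - B).
  by rewrite {1}e1; apply: mk.
have e2 : (fun i => b i - B) = (fun i => - ((a i - A) - (b i - B)) + (a i - A)).
  by apply: boolp.funext => i /=; ring.
have i2 : Np R p I P (fun i => b i - B) <=
    Np R p I P (fun i => (a i - A) - (b i - B)) + Np R p I P (fun i => a i - A).
  rewrite {1}e2; apply: le_trans; first exact: mk.
  rewrite lerD2r le_eqVlt; apply/orP; left; apply/eqP.
  by apply: (Np_eq R p I P Hp HP) => i _; exact: normrN.
have e3 : (fun i => (a i - A) - (b i - B)) = (fun i => (a i - b i) + (fun _ => - (A - B)) i).
  by apply: boolp.funext => i /=; ring.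
have i3 : Np R p I P (fun i => (a i - A) - (b i - B)) <= Np R p I P (fun i => a i - b i) + `|A - B|.
  rewrite e3; apply: le_trans; first exact: mk.
  by rewrite (Np_cst R p I P Hp HP) normrN.
have g1 := Np_ge0 R p I P (fun i => a i - A).
have g2 := Np_ge0 R p I P (fun i => b i - B).
clear e1 e2 e3 mk.
move: i1 i2 i3 hle g1 g2.
move: (Np R p I P (fun i => a i - A)) (Np R p I P (fun i => b i - B))
  (Np R p I P (fun i => (a i - A) - (b i - B))) (Np R p I P (fun i => a i - b i)) (`|A - B|).
move=> U V W N c i1 i2 i3 hle g1 g2.
rewrite ler_norml; apply/andP; split; lra.
Qed.

Lemma avg_perm n (s : {perm 'I_n}) (G : {ffun 'I_l -> 'I_n} -> R) :
  avgn n G = avgn n (fun h => G [ffun i => s (h i)]).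
Proof. by rewrite !avgPE (sum_inj_perm R l n G s). Qed.

Lemma ffun_comp n (y : 'I_n -> X) (s : {perm 'I_n}) (h : {ffun 'I_l -> 'I_n}) :
  (fun i => y ([ffun i => s (h i)] i)) = (fun i => y (s (h i))).
Proof. by apply: boolp.funext => i; rewrite ffunE. Qed.

Lemma GfE_perm n (y : 'I_n -> X) (s : {perm 'I_n}) : (l <= n)%N ->
  Gf n y = Npn n (fun h => K n (fun i => y (s (h i))) - avgn n (fun h => K n (fun i => y (s (h i))))).
Proof.
move=> ln; rewrite (GfE n y ln) /Np.
have eb : avgn n (fun h => K n (fun i => y (h i))) = avgn n (fun h => K n (fun i => y (s (h i)))).
  rewrite (avg_perm n s); congr (avg _ _ _); apply: boolp.funext => h.
  by rewrite ffun_comp.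
rewrite eb [in LHS](avg_perm n s); congr (powR (avg _ _ _ _) _); apply: boolp.funext => h.
by rewrite ffun_comp.
Qed.

End Core.

Section Core2.
Variables (R : realType) (X : Type) (d0 : X -> X -> R) (l : nat) (p : R)
  (K : nat -> ('I_l -> X) -> R).
Hypotheses (Hd0 : forall x y, 0 <= d0 x y) (Hl : (1 <= l)%N) (Hp : 1 <= p)
  (HK01 : forall m u, (0 < m)%N -> 0 <= K m u <= 1)
  (HKsym : forall m (s : 'S_l) u, (0 < m)%N -> K m (fun i => u (s i)) = K m u)
  (HKlip : forall m u v, (0 < m)%N ->
     `|K m u - K m v| <= l%:R^-1 * \sum_(i < l) d0 (u i) (v i)).

Local Notation Pn n := [pred h : {ffun 'I_l -> 'I_n} | injectiveb h].
Local Notation avgn n := (avg R _ (Pn n)).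
Local Notation Npn n := (Np R p _ (Pn n)).
Local Notation GF := (Gf R X l p K).

Let p0 : 0 < p. Proof. exact: lt_le_trans ltr01 Hp. Qed.

Lemma HPn n : (l <= n)%N -> (0 < #|Pn n|)%N.
Proof. by move=> ln; rewrite card_injP ffact_gt0. Qed.

Lemma Gf01 n (x : 'I_n -> X) : 0 <= GF n x <= 1.
Proof.
case: (ltnP n l) => ln.
  by rewrite /Gf ln lexx ler01.
have n0 : (0 < n)%N by apply: leq_trans ln.
have HP := HPn _ ln.
rewrite (@GfE _ _ _ _ _ Hl HKsym n x ln).
apply/andP; split; first exact: Np_ge0.
have a01 : forall h, 0 <= K n (fun i => x (h i)) <= 1 by move=> h; apply: HK01.
have m0 : 0 <= avgn n (fun h => K n (fun i => x (h i))).
  by apply: avg_ge0 => // h _; case/andP: (a01 h).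
have m1 : avgn n (fun h => K n (fun i => x (h i))) <= 1.
  rewrite -[X in _ <= X](avg_cst R _ (Pn n) HP 1).
  by apply: avg_le => // h _; case/andP: (a01 h).
move: m0 m1; move: (avgn n (fun h => K n (fun i => x (h i)))) => M m0 m1.
rewrite -(normr1 R) -(Np_cst R p _ (Pn n) Hp HP 1).
apply: (Np_le R p _ (Pn n) Hp HP) => h _.
rewrite normr1 ler_norml; case/andP: (a01 h) => h0 h1.
apply/andP; split; lra.
Qed.

Lemma diff_bound n (x y : 'I_n -> X) (s : {perm 'I_n}) : (l <= n)%N ->
  Npn n (fun h => K n (fun i => x (h i)) - K n (fun i => y (s (h i))))
    <= powR (n%:R^-1 * \sum_(i < n) powR (d0 (x i) (y (s i))) p) p^-1.
Proof.
move=> ln.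
have n0 : (0 < n)%N by apply: leq_trans ln.
have HP := HPn _ ln.
have step1 : Npn n (fun h => K n (fun i => x (h i)) - K n (fun i => y (s (h i))))
    <= Npn n (fun h => \sum_(i < l) l%:R^-1 * d0 (x (h i)) (y (s (h i)))).
  apply: (Np_le R p _ (Pn n) Hp HP) => h _.
  rewrite -mulr_sumr [X in _ <= X]ger0_norm; last first.
    by apply: mulr_ge0; [rewrite invr_ge0 ler0n | apply: sumr_ge0 => i _; apply: Hd0].
  exact: (HKlip n (fun i => x (h i)) (fun i => y (s (h i))) n0).
apply: (le_trans step1).
apply: le_trans; first exact: (Np_sum R p _ (Pn n) Hp HP).
have E1 : forall i : 'I_l, Npn n (fun h => l%:R^-1 * d0 (x (h i)) (y (s (h i))))
    = l%:R^-1 * powR (n%:R^-1 * \sum_(i < n) powR (d0 (x i) (y (s i))) p) p^-1.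
  move=> i; rewrite (NpZ R p _ (Pn n) Hp HP) ger0_norm ?invr_ge0 ?ler0n //.
  congr (_ * _); rewrite /Np; congr powR.
  rewrite avgPE (@double_count R l n (fun j => `|d0 (x j) (y (s j))| `^ p) i n0 ln).
  congr (_ * _); apply: eq_bigr => j _; by rewrite ger0_norm.
rewrite (eq_bigr _ (fun i _ => E1 i)) sumr_const card_ord -[(_ * _) *+ l]mulr_natl mulrA.
rewrite mulfV ?mul1r // pnatr_eq0 -lt0n //.
Qed.

Lemma core n (x y : 'I_n -> X) (s : {perm 'I_n}) :
  `|GF n x - GF n y| <= 2 * powR (n%:R^-1 * \sum_(i < n) powR (d0 (x i) (y (s i))) p) p^-1.
Proof.
case: (ltnP n l) => ln.
  rewrite /Gf ln subrr normr0; apply: mulr_ge0 => //; exact: powR_ge0.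
have HP := HPn _ ln.
rewrite (@GfE _ _ _ _ _ Hl HKsym n x ln) (@GfE_perm _ _ _ _ _ Hl HKsym n y s ln).
apply: le_trans; first exact: (@key_analytic R p Hp _ _ HP).
rewrite ler_pM2l //.
exact: diff_bound.
Qed.

End Core2.

Theorem proposition2 (R : realType) (X : Type) (d0 : X -> X -> R)
  (Hmet : is_metric R X d0) (Hcpt : metric_compact R X d0)
  (Hd1 : forall x y, d0 x y <= 1)
  (l : nat) (Hl : (1 <= l)%N) (p : R) (Hp : 1 <= p)
  (K : nat -> ('I_l -> X) -> R)
  (HK01 : forall m u, (0 < m)%N -> 0 <= K m u <= 1)
  (HKsym : forall m (s : 'S_l) u, (0 < m)%N -> K m (fun i => u (s i)) = K m u)
  (HKlip : forall m u v, (0 < m)%N ->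
     `|K m u - K m v| <= l%:R^-1 * \sum_(i < l) d0 (u i) (v i)) :
  forall xs ys : seq X,
    `|f_stat R X l p K xs - f_stat R X l p K ys| <= 2 * d1 R X p d0 xs ys.
Proof.
move=> xs ys.
have Hd0 : forall x y, 0 <= d0 x y by case: Hmet.
have G01 := @Gf01 R X l p K Hl Hp HK01 HKsym.
rewrite !f_statE /d1.
have [Hsz|Hsz] := eqVneq (size xs) (size ys); last first.
  rewrite /=.
  have := G01 _ (atom X xs); have := G01 _ (atom X ys).
  move: (Gf R X l p K (size xs) (atom X xs)) (Gf R X l p K (size ys) (atom X ys)) => a b.
  move=> /andP[b0 b1] /andP[a0 a1].
  rewrite ler_norml; apply/andP; split; lra.
rewrite /=.
case: ifP => [/eqP n0|n0].
  have Hx : (size xs < l)%N by rewrite n0.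
  have Hy : (size ys < l)%N by rewrite -Hsz n0.
  by rewrite /Gf Hx Hy subrr normr0 mulr0.
have n0' : (0 < size xs)%N by rewrite lt0n n0.
have [x0 _] : (X * unit)%type := (atom X xs (Ordinal n0'), tt).
have Ey : Gf R X l p K (size ys) (atom X ys) =
    Gf R X l p K (size xs) (fun j : 'I_(size xs) => nth x0 ys j).
  have -> : atom X ys = (fun j => nth x0 ys j).
    by apply: boolp.funext => j; rewrite /atom (tnth_nth x0).
  by rewrite Hsz.
rewrite Ey.
have gen : forall L : R, (forall s : 'S_(size xs), L <= 2 * d1_cost R X p d0 xs ys s) ->
    L <= 2 * \big[Order.min/d1_cost R X p d0 xs ys 1%g]_(s : 'S_(size xs)) d1_cost R X p d0 xs ys s.
  move=> L HL.
  have : L / 2 <= \big[Order.min/d1_cost R X p d0 xs ys 1%g]_(s : 'S_(size xs)) d1_cost R X p d0 xs ys s.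
    apply/bigmin_geP; split; [have := HL 1%g | move=> s _; have := HL s]; lra.
  lra.
apply: gen => s.
have := @core R X d0 l p K Hd0 Hl Hp HKsym HKlip (size xs) (atom X xs) (fun j => nth x0 ys j) s.
have eS : \sum_(i < size xs) powR (d0 (atom X xs i) (nth (atom X xs i) ys (s i))) p =
    \sum_(i < size xs) powR (d0 (atom X xs i) (nth x0 ys (s i))) p.
  by apply: eq_bigr => i _; rewrite (set_nth_default x0) // -Hsz ltn_ord.
by rewrite /d1_cost eS.
Qed.
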